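(* Let $f \in \mathbb{R}[x_1,\ldots,x_n]$ be a nonzero polynomial. Then there is a monomial $m$ occurring in $f$ (i.e. with nonzero coefficient in $f$) such that $\dim \partial^{=k} f \geq \dim \partial^{=k} m$ for every integer $k \geq 0$. In particular, if every monomial occurring in $f$ contains at least $r$ distinct variables, then $\dim \partial^{=k} f \geq \binom{r}{k}$ for every $k$.
   Context: For $\beta=(\beta_1,\ldots,\beta_n)\in\mathbb{N}^n$, $\partial_\beta f$ denotes the partial derivative of $f$ obtained by differentiating $\beta_i$ times with respect to $x_i$ for each $i$. For $k\ge 0$, $\partial^{=k} f$ denotes the real linear space spanned by all $\partial_\beta f$ with $\beta_1+\cdots+\beta_n=k$. The dimension $\dim \partial^{=k} m$ for a monomial $m$ is defined in the same way (it does not depend on the nonzero scalar multiple of $m$). *)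

(* Defs.v *)
From HB Require Import structures.
From mathcomp Require Import all_boot all_order all_algebra.
From mathcomp Require Import reals.
From mathcomp Require Import mpoly.

Set Implicit Arguments.
Unset Strict Implicit.
Unset Printing Implicit Defensive.

Import Order.TTheory GRing.Theory Num.Theory.
Local Open Scope ring_scope.

Section LinAlg.
Variables (K : fieldType) (V : lmodType K).

Definition span (S : V -> Prop) : V -> Prop :=
  fun v => exists s : seq V, (forall x, x \in s -> S x) /\
    exists c : nat -> K, v = \sum_(i < size s) c i *: s`_i.

Definition lin_indep (s : seq V) : Prop :=
  forall c : nat -> K, \sum_(i < size s) c i *: s`_i = 0 ->
    forall i, (i < size s)%N -> c i = 0.

Definition is_dim (W : V -> Prop) (d : nat) : Prop :=
  (exists s : seq V, size s = d /\ (forall x, x \in s -> W x) /\ lin_indep s) /\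
  (forall s : seq V, (forall x, x \in s -> W x) -> lin_indep s -> (size s <= d)%N).
End LinAlg.

Section Deriv.
Variables (R : realType) (n : nat).

(* partial^{=k} f : the real span of all partial_beta f with |beta| = k.
   [mderivm b f] differentiates b i times w.r.t. x_i for each i. *)
Definition derivk_space (k : nat) (f : {mpoly R[n]}) : {mpoly R[n]} -> Prop :=
  span (fun g => exists b : 'X_{1..n}, mdeg b = k /\ g = mderivm b f).

Definition nvars (m : 'X_{1..n}) : nat := #|[set i : 'I_n | m i != 0%N]|.
End Deriv.

(* Main.v *)
Require Import Defs.
From HB Require Import structures.
From mathcomp Require Import all_boot all_order all_algebra.
From mathcomp Require Import reals.
From mathcomp Require Import mpoly.
From Stdlib Require Import ClassicalEpsilon Classical.
Set Implicit Arguments.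
Unset Strict Implicit.
Unset Printing Implicit Defensive.
Import Order.TTheory GRing.Theory Num.Theory.
Local Open Scope ring_scope.

Section LA.
Variables (K : fieldType) (V : lmodType K).

Definition in_span (t : seq V) (v : V) :=
  exists c : nat -> K, v = \sum_(i < size t) c i *: t`_i.

Lemma in_span0 t : in_span t 0.
Proof. by exists (fun _ => 0); rewrite big1 // => i _; rewrite scale0r. Qed.

Lemma in_spanD t u v : in_span t u -> in_span t v -> in_span t (u + v).
Proof.
move=> [c ->] [d ->]; exists (fun i => c i + d i).
by rewrite -big_split; apply: eq_bigr => i _; rewrite scalerDl.
Qed.

Lemma in_spanZ t a v : in_span t v -> in_span t (a *: v).
Proof.
move=> [c ->]; exists (fun i => a * c i).
by rewrite scaler_sumr; apply: eq_bigr => i _; rewrite scalerA.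
Qed.

Lemma in_span_mem t x : x \in t -> in_span t x.
Proof.
move=> xt; have hi : (index x t < size t)%N by rewrite index_mem.
exists (fun i => (i == index x t)%:R).
rewrite (bigD1 (Ordinal hi))//= eqxx scale1r nth_index //.
rewrite big1 ?addr0 // => i /eqP ne; case: eqP => [h|_]; last by rewrite scale0r.
by case: ne; apply: val_inj; rewrite /= h.
Qed.

Lemma in_span_sum t (I : finType) (P : pred I) (F : I -> V) :
  (forall i, P i -> in_span t (F i)) -> in_span t (\sum_(i | P i) F i).
Proof.
move=> H; apply: (big_ind (in_span t)); [exact: in_span0|exact: in_spanD|exact: H].
Qed.

Lemma span_sub (S : V -> Prop) t v :
  (forall x, S x -> in_span t x) -> Defs.span S v -> in_span t v.
Proof.
move=> H [s [Hs [c ->]]]; apply: in_span_sum => i _; apply: in_spanZ.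
by apply: H; apply: Hs; apply: mem_nth.
Qed.

Lemma span_gen (S : V -> Prop) x : S x -> Defs.span S x.
Proof.
move=> Sx; exists [:: x]; split; first by move=> y; rewrite inE => /eqP ->.
by exists (fun _ => 1); rewrite big_ord1 scale1r.
Qed.

Lemma indep_le s t : lin_indep s -> (forall x, x \in s -> in_span t x) ->
  (size s <= size t)%N.
Proof.
move=> Hind Hs; rewrite leqNgt; apply/negP => Hlt.
pose p := size s; pose q := size t.
have Hc : forall i : 'I_p, exists c : nat -> K, s`_i = \sum_(j < q) c j *: t`_j.
  by move=> i; apply: Hs; apply: mem_nth.
pose C i := proj1_sig (constructive_indefinite_description _ (Hc i)).
have HC (i : 'I_p) : s`_i = \sum_(j < q) C i j *: t`_j.
  exact: (proj2_sig (constructive_indefinite_description _ (Hc i))).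
pose M : 'M[K]_(p, q) := \matrix_(i < p, j < q) C i j.
have : kermx M != 0.
  rewrite -mxrank_eq0 mxrank_ker subn_eq0 -ltnNge.
  exact: leq_ltn_trans (rank_leq_col M) Hlt.
move=> Hnz.
have [k Hk] : exists k, row k (kermx M) != 0.
  apply/existsP; rewrite -negb_forall; apply: contra Hnz => /forallP H.
  by apply/eqP/row_matrixP => k; rewrite row0; apply/eqP; rewrite -[_ == _]negbK H.
pose u := row k (kermx M).
have uM : u *m M = 0 by rewrite /u -row_mul mulmx_ker row0.
pose c := fun i : nat => if @insub nat (fun i => i < p)%N 'I_p i is Some j then u 0 j else 0.
have : \sum_(i < size s) c i *: s`_i = 0.
  transitivity (\sum_(i < p) u 0 i *: s`_i).
    by apply: eq_bigr => i _; rewrite /c valK.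
  transitivity (\sum_(j < q) (u *m M) 0 j *: t`_j); last first.
    by rewrite uM big1 // => j _; rewrite mxE scale0r.
  under eq_bigr do rewrite HC scaler_sumr.
  rewrite exchange_big /=; apply: eq_bigr => j _.
  rewrite mxE scaler_suml; apply: eq_bigr => i _.
  by rewrite mxE scalerA (_ : M i j = C i j) // /M mxE.
move=> /Hind H0; move: Hk; rewrite /u; move/eqP; apply; apply/rowP => j; rewrite [RHS]mxE.
by have := H0 j (ltn_ord j); rewrite /c valK.
Qed.

Lemma dim_exists (S : V -> Prop) t :
  (forall x, S x -> in_span t x) -> exists d, is_dim (Defs.span S) d.
Proof.
move=> H.
have Hb s : (forall x, x \in s -> Defs.span S x) -> lin_indep s -> (size s <= size t)%N.
  move=> Hs Hi; apply: indep_le => // x /Hs; exact: span_sub.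
pose P d := exists s : seq V, size s = d /\ (forall x, x \in s -> Defs.span S x) /\ lin_indep s.
have : forall N, (forall e, P e -> (e <= N)%N) -> exists d, P d /\ forall e, P e -> (e <= d)%N.
  elim=> [|N IH] HN.
    exists 0%N; split => [|e /HN //]; exists [::]; split=> //; split=> // c _ i //.
  case: (classic (P N.+1)) => [PN|nPN]; first by exists N.+1.
  apply: IH => e Pe; have := HN e Pe; rewrite leq_eqVlt => /orP [/eqP E|//].
  by case: nPN; rewrite -E.
case/(_ (size t)) => [e [s [<- [Hs Hi]]]|d [Pd Hd]]; first exact: Hb.
exists d; split => // s Hs Hi; apply: Hd; by exists s.
Qed.
End LA.

Section MP.
Variables (R : realType) (n : nat).
Implicit Types (b g m mu : 'X_{1..n}) (p q : {mpoly R[n]}).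

Definition cf b g : R := (\prod_(i < n) (g i ^_ b i))%:R.

Lemma cf_neq0 b g : (b <= g)%MM -> cf b g != 0.
Proof.
move/mnm_lepP=> H; rewrite /cf pnatr_eq0 -lt0n prodn_gt0 // => i.
by rewrite ffact_gt0.
Qed.

Lemma cf_eq0 b g : ~~ (b <= g)%MM -> cf b g = 0.
Proof.
move=> H; have [i Hi] : exists i, (g i < b i)%N.
  case: (boolP [exists i, g i < b i]%N) => [/existsP //|].
  rewrite negb_exists => /forallP Hf; case/negP: H.
  by apply/mnm_lepP => i; have := Hf i; rewrite -leqNgt.
rewrite /cf (bigD1 i) //=.
have -> : g i ^_ b i = 0%N by apply/eqP; rewrite -leqn0 leqNgt ffact_gt0 -ltnNge.
by rewrite mul0n.
Qed.

Lemma mderivm_foldD b p q : mderivm b (p + q) = mderivm b p + mderivm b q.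
Proof.
rewrite !mderivm_foldr; elim: (flatten _) => //= i s ->; exact: mderivD.
Qed.

Lemma mderivm_foldZ b c p : mderivm b (c *: p) = c *: mderivm b p.
Proof.
rewrite !mderivm_foldr; elim: (flatten _) => //= i s ->; exact: mderivZ.
Qed.

Lemma mderivm_fold0 b : mderivm b (0 : {mpoly R[n]}) = 0.
Proof. by have := mderivm_foldZ b 0 0; rewrite !scale0r. Qed.

Lemma mderivmX b g : mderivm b 'X_[g] = cf b g *: 'X_[g - b].
Proof.
move: {2}(mdeg b) (erefl (mdeg b)) => k; elim: k b => [|k IH] b Hb.
  move: Hb => /eqP; rewrite mdeg_eq0 => /eqP ->.
  rewrite mderivm0m subm0 /cf big1 ?scale1r // => i _.
  by rewrite mnm0E ffactn0.
have [i Hi] : exists i, (0 < b i)%N.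
  case: (boolP [exists i, 0 < b i]%N) => [/existsP //|].
  rewrite negb_exists => /forallP Hf.
  suff : b = 0%MM by move=> E; move: Hb; rewrite E mdeg0.
  by apply/mnmP => i; rewrite mnm0E; have := Hf i; rewrite lt0n negbK => /eqP.
have Hle : (U_(i) <= b)%MM.
  by apply/mnm_lepP => j; rewrite mnm1E; case: eqP => [<-|] //.
pose b' := (b - U_(i))%MM.
have Eb : b = (b' + U_(i))%MM by rewrite submK.
have Hb' : mdeg b' = k by apply/eqP; rewrite -eqSS -Hb Eb mdegD mdeg1 addn1.
rewrite Eb mderivmDm IH // mderivmU1m mderivZ mderivX scalerA submDA.
congr (_ *: 'X_[_]); rewrite /cf -natrM (bigD1 i) //= [in RHS](bigD1 i) //=.
rewrite mnmBE mulnAC; congr (_%:R); congr (_ * _)%N.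
  by rewrite mnmDE mnm1E eqxx addn1 ffactnSr.
apply: eq_bigr => j Hj; congr (_ ^_ _); rewrite mnmDE mnm1E.
by rewrite eq_sym (negbTE Hj) addn0.
Qed.

Lemma mcoeff_mderivm b p mu : (mderivm b p)@_mu = cf b (mu + b) * p@_(mu + b).
Proof.
elim/mpolyind: p => [|c m q _ _ IH].
  by rewrite mderivm_fold0 !mcoeff0 mulr0.
rewrite mderivm_foldD mderivm_foldZ mderivmX !mcoeffD !mcoeffZ IH mcoeffX mcoeffX.
have key : cf b m * ((m - b)%MM == mu)%:R = cf b (mu + b)%MM * (m == (mu + b)%MM)%:R.
  have [Hbm|Hbm] := boolP (b <= m)%MM.
    have -> : (m == (mu + b)%MM) = ((m - b)%MM == mu).
      by rewrite -{1}(submK Hbm) eqm_add2r.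
    case: eqP => [<-|]; last by rewrite !mulr0.
    by rewrite submK.
  rewrite cf_eq0 // mul0r; case: eqP => [E|]; last by rewrite mulr0.
  by case/negP: Hbm; rewrite E; apply: lem_addl.
by rewrite mulrDr key mulrCA.
Qed.

Lemma deriv_indep f (L : seq 'X_{1..n}) : f != 0 -> uniq L ->
  (forall b, b \in L -> (b <= mlead f)%MM) -> @lin_indep R _ [seq mderivm b f | b <- L].
Proof.
move=> fnz uL HL; rewrite /lin_indep size_map => c Hsum i Hi.
apply/eqP; apply: contraT => Hci.
set p := size L in Hsum Hi.
have Hs : \sum_(k < p) c k *: mderivm (nth 0%MM L k) f = 0.
  by rewrite -[RHS]Hsum; apply: eq_bigr => k _; rewrite (nth_map 0%MM).
pose i0 : 'I_p := Ordinal Hi.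
case: (@arg_minP _ _ _ i0 (fun j => c j != 0) (fun j => nth 0%MM L j) Hci).
move=> jm Hjm Hmin.
pose a := mlead f.
have Hla : (nth 0%MM L jm <= a)%MM by apply: HL; apply: mem_nth.
pose mu := (a - nth 0%MM L jm)%MM.
have Hmu : (mu + nth 0%MM L jm)%MM = a by rewrite submK.
have := congr1 (mcoeff mu) Hs; rewrite mcoeff0 raddf_sum (bigD1 jm) //= big1.
  rewrite addr0 mcoeffZ mcoeff_mderivm Hmu => /eqP.
  have Hnz : c jm * (cf (nth 0%MM L jm) a * f@_a) != 0.
    by rewrite !mulf_neq0 // ?cf_neq0 // mleadc_eq0.
  by rewrite (negbTE Hnz).
move=> k Hk; rewrite mcoeffZ mcoeff_mderivm.
have [ck0|ckn0] := eqVneq (c k) 0; first by rewrite ck0 mul0r.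
have Hle := Hmin k ckn0.
have Hne : nth 0%MM L jm != nth 0%MM L k.
  by rewrite nth_uniq // ?ltn_ord //; apply: contra Hk => /eqP E; apply/eqP/val_inj.
have Hlt : (nth 0%MM L jm < nth 0%MM L k)%O by rewrite lt_neqAle Hne Hle.
rewrite (@mcoeff_gt_mlead _ _ f) ?mulr0 //.
by rewrite -/a -Hmu ltmc_add2r.
Qed.

Definition mkF k (F : {ffun 'I_n -> 'I_k.+1}) : 'X_{1..n} := [multinom (F i : nat) | i < n].
Definition allk k := [seq mkF F | F <- enum {: {ffun 'I_n -> 'I_k.+1}}].

Lemma allk_mem k b : mdeg b = k -> b \in allk k.
Proof.
move=> Hb; apply/mapP; exists [ffun i => inord (b i)]; first by rewrite mem_enum.
apply/mnmP => i; rewrite mnmE ffunE inordK // ltnS -Hb mdegE (bigD1 i) //=.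
exact: leq_addr.
Qed.

Lemma dim_ex k p : exists d, @is_dim R _ (derivk_space k p) d.
Proof.
apply: (@dim_exists _ _ _ [seq mderivm b p | b <- allk k]) => x [b [Hb ->]].
by apply: in_span_mem; apply: map_f; apply: allk_mem.
Qed.

Lemma is_dim_ge (W : {mpoly R[n]} -> Prop) d s : @is_dim R _ W d ->
  (forall x, x \in s -> W x) -> lin_indep s -> (size s <= d)%N.
Proof. by move=> [_ H] Hs Hi; apply: H. Qed.

Lemma is_dim_le (W : {mpoly R[n]} -> Prop) d t : @is_dim R _ W d ->
  (forall x, W x -> in_span t x) -> (d <= size t)%N.
Proof.
move=> [[s [<- [Hs Hi]]] _] H; apply: indep_le => // x /Hs; exact: H.
Qed.

Lemma deriv_gen k b (f : {mpoly R[n]}) : mdeg b = k -> derivk_space k f (mderivm b f).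
Proof. by move=> Hb; apply: span_gen; exists b. Qed.

End MP.

Theorem theorem1 (R : realType) (n : nat) (f : {mpoly R[n]}) (hf : f != 0) :
  (exists2 m : 'X_{1..n}, m \in msupp f &
     forall k : nat, exists d_f d_m : nat,
       [/\ is_dim (derivk_space k f) d_f,
           is_dim (derivk_space k 'X_[R, m]) d_m & (d_m <= d_f)%N])
  /\
  (forall r : nat, (forall m : 'X_{1..n}, m \in msupp f -> (r <= nvars m)%N) ->
     forall k : nat, exists d_f : nat,
       is_dim (derivk_space k f) d_f /\ ('C(r, k) <= d_f)%N).
Proof.
pose a := mlead f.
have Ha : a \in msupp f by apply: mlead_supp.
split.
  exists a => // k.
  have [df Hdf] := dim_ex k f; have [dm Hdm] := dim_ex k 'X_[R, a].
  exists df, dm; split => //.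
  pose B := undup [seq b <- allk n k | (b <= a)%MM && (mdeg b == k)].
  have memB b : (b \in B) = ((b <= a)%MM && (mdeg b == k)).
    rewrite mem_undup mem_filter andb_idr // => /andP [_ /eqP]; exact: allk_mem.
  apply: (@leq_trans (size B)).
    rewrite -(size_map (fun b => 'X_[R, (a - b)%MM])).
    apply: (is_dim_le Hdm) => x; apply: span_sub => y [b [Hb ->]].
    rewrite mderivmX; have [Hba|Hba] := boolP (b <= a)%MM.
      apply: in_spanZ; apply: in_span_mem; apply: map_f.
      by rewrite memB Hba Hb eqxx.
    by rewrite cf_eq0 // scale0r; apply: in_span0.
  rewrite -(size_map (fun b => mderivm b f)).
  apply: (is_dim_ge Hdf).
    move=> x /mapP [b]; rewrite memB => /andP [_ /eqP Hb] ->.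
    exact: deriv_gen.
  apply: deriv_indep => //; first exact: undup_uniq.
  by move=> b; rewrite memB => /andP [].
move=> r Hr k.
have [df Hdf] := dim_ex k f; exists df; split => //.
pose S := [set i : 'I_n | a i != 0%N].
pose Ts := enum [set T : {set 'I_n} | T \subset S & #|T| == k].
pose ind (T : {set 'I_n}) : 'X_{1..n} := [multinom ((i \in T) : nat) | i < n].
apply: (@leq_trans 'C(#|S|, k)); first exact: leq_bin2l (Hr a Ha).
have -> : 'C(#|S|, k) = size [seq mderivm (ind T) f | T <- Ts].
  by rewrite size_map /Ts -cardE cards_draws.
apply: (is_dim_ge Hdf).
  move=> x /mapP [T]; rewrite mem_enum inE => /andP [_ /eqP HT] ->.
  apply: deriv_gen; rewrite mdegE -HT -sum1_card big_mkcond /=.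
  rewrite [RHS]big_mkcond; apply: eq_bigr => i _; rewrite mnmE; by case: (i \in T).
rewrite (map_comp (fun b => mderivm b f) ind); apply: deriv_indep => //.
  rewrite map_inj_uniq ?enum_uniq // => T1 T2 /mnmP E; apply/setP => i.
  by have := E i; rewrite !mnmE; case: (i \in T1); case: (i \in T2).
move=> b /mapP [T]; rewrite mem_enum inE => /andP [HTS _] ->.
apply/mnm_lepP => i; rewrite mnmE; case: (boolP (i \in T)) => // /(subsetP HTS).
by rewrite inE lt0n.
Qed.
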